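(* For every prior $(q_H,q_1,q_2,q_L)$ with strictly positive entries summing to $1$ and every receiver type $i\in[-1/2,1/2]$, all types accept the recommendation in the limit $R\to 1$ and in the limit $R\to 0$; that is, the limits $\lim_{R\to1}\big(\Delta_O^B(R)-i\,\Delta_S^B(R)\big)$ and $\lim_{R\to0}\big(\Delta_O^B(R)-i\,\Delta_S^B(R)\big)$ exist and are nonnegative.
   Context: Setting. Consumer types are $i\in[-1/2,1/2]$, distributed according to a continuous cumulative distribution function $F$ with full support on $[-1/2,1/2]$. A product has a quality vector $(Q_1,Q_2)\in\{0,1\}^2$; a type-$i$ consumer gets payoff $(1/2+i)Q_1+(1/2-i)Q_2$ from it. The versions $(1,1),(1,0),(0,1),(0,0)$ have prior probabilities $q_H,q_1,q_2,q_L$. Given a threshold $R\in(0,1)$, a sender with type drawn from $F$ gives a buy recommendation $B$ if her payoff from the product is at least $R$ and a don't-buy recommendation otherwise. Let $\phi_1(R)=1-F(R-1/2)$, $\phi_2(R)=F(1/2-R)$, $\pi^B(R)=q_H+q_1\phi_1(R)+q_2\phi_2(R)$, and posteriors after $B$: $p^B_H=q_H/\pi^B$, $p^B_1=q_1\phi_1(R)/\pi^B$, $p^B_2=q_2\phi_2(R)/\pi^B$. Define $\Delta_O^B(R)=p_H^B-q_H+\frac{p_1^B-q_1}{2}+\frac{p_2^B-q_2}{2}$ and $\Delta_S^B(R)=(p_2^B-q_2)-(p_1^B-q_1)$. A receiver of type $i$ accepts the recommendation at threshold $R$ if and only if $\Delta_O^B(R)\ge i\,\Delta_S^B(R)$ (equivalently,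 the expected payoff of the product after a buy recommendation is at least that of an unrecommended product, and after a don't-buy recommendation at most that). *)

(* Defs.v *)
From Stdlib Require Import Reals.
From Coquelicot Require Import Coquelicot.
Open Scope R_scope.

Definition cdf_full_support (F : R -> R) : Prop :=
  (forall x, continuous F x) /\
  (forall x y, x <= y -> F x <= F y) /\
  (forall x, x <= -1/2 -> F x = 0) /\
  (forall x, 1/2 <= x -> F x = 1) /\
  (forall x y, -1/2 <= x -> x < y -> y <= 1/2 -> F x < F y).

Definition phi1 (F : R -> R) (R0 : R) : R := 1 - F (R0 - 1/2).
Definition phi2 (F : R -> R) (R0 : R) : R := F (1/2 - R0).

Definition piB (F : R -> R) (qH q1 q2 : R) (R0 : R) : R :=
  qH + q1 * phi1 F R0 + q2 * phi2 F R0.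

Definition pBH (F : R -> R) (qH q1 q2 : R) (R0 : R) : R :=
  qH / piB F qH q1 q2 R0.
Definition pB1 (F : R -> R) (qH q1 q2 : R) (R0 : R) : R :=
  q1 * phi1 F R0 / piB F qH q1 q2 R0.
Definition pB2 (F : R -> R) (qH q1 q2 : R) (R0 : R) : R :=
  q2 * phi2 F R0 / piB F qH q1 q2 R0.

Definition DeltaO (F : R -> R) (qH q1 q2 : R) (R0 : R) : R :=
  pBH F qH q1 q2 R0 - qH
  + (pB1 F qH q1 q2 R0 - q1) / 2
  + (pB2 F qH q1 q2 R0 - q2) / 2.

Definition DeltaS (F : R -> R) (qH q1 q2 : R) (R0 : R) : R :=
  (pB2 F qH q1 q2 R0 - q2) - (pB1 F qH q1 q2 R0 - q1).

Definition accept_gap (F : R -> R) (qH q1 q2 i : R) (R0 : R) : R :=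
  DeltaO F qH q1 q2 R0 - i * DeltaS F qH q1 q2 R0.

(* Main.v *)
Require Import Defs.
From Stdlib Require Import Reals Lra.
From Coquelicot Require Import Coquelicot.
Open Scope R_scope.

Lemma cpl f g x : continuity_pt f x -> continuity_pt g x -> continuity_pt (fun y => f y + g y) x.
Proof. exact (continuity_pt_plus f g x). Qed.
Lemma cmi f g x : continuity_pt f x -> continuity_pt g x -> continuity_pt (fun y => f y - g y) x.
Proof. exact (continuity_pt_minus f g x). Qed.
Lemma cmu f g x : continuity_pt f x -> continuity_pt g x -> continuity_pt (fun y => f y * g y) x.
Proof. exact (continuity_pt_mult f g x). Qed.
Lemma cdv f g x : continuity_pt f x -> continuity_pt g x -> g x <> 0 -> continuity_pt (fun y => f y / g y) x.
Proof. exact (continuity_pt_div f g x). Qed.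
Lemma cco (c x : R) : continuity_pt (fun _ => c) x.
Proof. exact (continuity_pt_const (fun _ => c) x (fun _ _ => eq_refl)). Qed.
Lemma cid x : continuity_pt (fun y => y) x.
Proof. exact (derivable_continuous_pt _ _ (derivable_pt_id x)). Qed.

Lemma cF F c x : cdf_full_support F -> continuity_pt (fun y => F (y - c)) x.
Proof.
  intros [HF _]. apply (continuity_pt_comp (fun y => y - c) F).
  - apply cmi; [apply cid | apply cco].
  - apply continuity_pt_filterlim. apply HF.
Qed.
Lemma cF' F c x : cdf_full_support F -> continuity_pt (fun y => F (c - y)) x.
Proof.
  intros [HF _]. apply (continuity_pt_comp (fun y => c - y) F).
  - apply cmi; [apply cco | apply cid].
  - apply continuity_pt_filterlim. apply HF.
Qed.

Lemma cont_gap F qH q1 q2 i x : cdf_full_support F -> piB F qH q1 q2 x <> 0 ->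
  continuity_pt (accept_gap F qH q1 q2 i) x.
Proof.
  intros HF Hp.
  change (continuity_pt (fun R0 => accept_gap F qH q1 q2 i R0) x).
  unfold accept_gap, DeltaO, DeltaS, pBH, pB1, pB2.
  unfold piB in *. unfold phi1, phi2 in *.
  repeat first
   [ apply cmi | apply cdv | apply cpl | apply cmu | apply cco | apply cid
   | apply cF | apply cF' | exact HF | exact Hp ]. all: lra.
Qed.

Theorem proposition2 (F : R -> R) (qH q1 q2 qL i : R) :
  cdf_full_support F ->
  0 < qH -> 0 < q1 -> 0 < q2 -> 0 < qL -> qH + q1 + q2 + qL = 1 ->
  -1/2 <= i <= 1/2 ->
  (exists l : R,
     filterlim (accept_gap F qH q1 q2 i) (at_left 1) (locally l) /\ 0 <= l) /\
  (exists l : R,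
     filterlim (accept_gap F qH q1 q2 i) (at_right 0) (locally l) /\ 0 <= l).
Proof.
  intros HF HqH Hq1 Hq2 HqL Hsum Hi.
  pose proof HF as (_ & _ & H0 & H1 & _).
  assert (A1 : F (1 - 1/2) = 1) by (apply H1; lra).
  assert (B1 : F (1/2 - 1) = 0) by (apply H0; lra).
  assert (A0 : F (0 - 1/2) = 0) by (apply H0; lra).
  assert (B0 : F (1/2 - 0) = 1) by (apply H1; lra).
  split.
  - exists (accept_gap F qH q1 q2 i 1). split.
    + apply (filterlim_filter_le_1 (F := locally 1)).
      * intros P HP. apply filter_le_within. exact HP.
      * apply continuity_pt_filterlim. apply cont_gap; auto.
        unfold piB, phi1, phi2. rewrite A1, B1. lra.
    + unfold accept_gap, DeltaO, DeltaS, pBH, pB1, pB2, piB, phi1, phi2.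
      rewrite A1, B1.
      replace (qH + q1 * (1 - 1) + q2 * 0) with qH by ring.
      replace (qH / qH) with 1 by (field; lra).
      replace (q1 * (1 - 1) / qH) with 0 by (field; lra).
      replace (q2 * 0 / qH) with 0 by (field; lra).
      nra.
  - exists (accept_gap F qH q1 q2 i 0). split.
    + apply (filterlim_filter_le_1 (F := locally 0)).
      * intros P HP. apply filter_le_within. exact HP.
      * apply continuity_pt_filterlim. apply cont_gap; auto.
        unfold piB, phi1, phi2. rewrite A0, B0. lra.
    + unfold accept_gap, DeltaO, DeltaS, pBH, pB1, pB2, piB, phi1, phi2.
      rewrite A0, B0.
      set (s := qH + q1 * (1 - 0) + q2 * 1).
      assert (Hs : s = 1 - qL) by (unfold s; lra).
      rewrite Hs.
      assert (Hk : 0 <= 1 / (1 - qL) - 1).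
      { assert (1 - qL <= 1) by lra.
        assert (0 < 1 - qL) by lra.
        replace (1 / (1 - qL) - 1) with (qL / (1 - qL)) by (field; lra).
        apply Rlt_le, Rdiv_lt_0_compat; lra. }
      set (k := 1 / (1 - qL) - 1) in Hk.
      replace (qH / (1 - qL) - qH + (q1 * (1 - 0) / (1 - qL) - q1) / 2 +
        (q2 * 1 / (1 - qL) - q2) / 2 -
        i * (q2 * 1 / (1 - qL) - q2 - (q1 * (1 - 0) / (1 - qL) - q1)))
        with (k * (qH + q1/2 + q2/2 - i * (q2 - q1))) by (unfold k; field; lra).
      apply Rmult_le_pos; auto. nra.
Qed.
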